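(* Let $\overrightarrow{C}=\bigcup_{j=1}^t m_j\overrightarrow{C_{n_j}}$ be a $\Theta$-oriented 2-regular graph with at least two cycle components (where $n_1<\dots<n_t$ are the distinct cycle lengths, $m_j\ge1$, $\sum_j m_j\ge2$), and let $D$ be a distance set of $\overrightarrow{C}$. Then $\overrightarrow{C}$ is $D$-antimagic if and only if $\min(D)=0$.
   Context: An oriented graph is a simple graph each of whose edges is given one direction (an arc $(u,v)$ goes from $u$ to $v$). For vertices $u,v$, $d(u,v)$ is the length of a shortest directed path from $u$ to $v$ ($d(u,u)=0$, $\infty$ if no path). A distance set of an oriented graph is a nonempty set $D$ of nonnegative integers each of which is a finite distance $d(u,v)$ for some pair of vertices. $N_D(v)=\{y : d(v,y)\in D\}$; for a bijection $f:V\to\{1,\dots,|V|\}$, $\omega_D(v)=\sum_{x\in N_D(v)}f(x)$ (empty sum $0$); $f$ is $D$-antimagic if distinct vertices have distinct $D$-weights, and the graph is $D$-antimagic if such an $f$ exists. An oriented 2-regular graph is an orientation of a disjoint union of cycles, each of length at least $3$. A cycle component on $v_1,\dots,v_n$ is $\Theta$-oriented if it has exactly one source (in-degree $0$) and exactly one sink (out-degree $0$) and these are adjacent, i.e. up to relabeling its arcs are $(v_i,v_{i+1})$, $1\le i\le n-1$, and $(v_1,v_n)$; the oriented 2-regular graph is $\Theta$-oriented if every cycle component is $\Theta$-oriented. *)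

(* Defs.v *)
From mathcomp Require Import all_boot.
Set Implicit Arguments. Unset Strict Implicit. Unset Printing Implicit Defensive.

Fixpoint walkb (T : finType) (e : rel T) (k : nat) (u v : T) : bool :=
  if k is k'.+1 then [exists w, e u w && walkb e k' w v] else u == v.

Definition is_dist (T : finType) (e : rel T) (u v : T) (k : nat) : bool :=
  walkb e k u v && [forall j : 'I_k, ~~ walkb e j u v].

Definition distance_set (T : finType) (e : rel T) (D : pred nat) : Prop :=
  (exists k, D k) /\ (forall k, D k -> exists u v, is_dist e u v k).

Definition ND (T : finType) (e : rel T) (D : pred nat) (v y : T) : bool :=
  [exists k : 'I_#|T|.+1, is_dist e v y k && D k].

Definition Dweight (T : finType) (e : rel T) (D : pred nat) (f : T -> nat)
  (v : T) : nat := \sum_(x | ND e D v x) f x.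

Definition labeling (T : finType) (f : T -> nat) : Prop :=
  injective f /\ (forall x, 0 < f x <= #|T|).

Definition D_antimagic (T : finType) (e : rel T) (D : pred nat) : Prop :=
  exists f : T -> nat, labeling f /\ injective (Dweight e D f).

(* Canonical Theta-oriented 2-regular graph with cycle lengths ns:
   component c has vertices 0,...,n-1 (n = nth 0 ns c), arcs (i,i+1) for
   i < n-1 and the arc (0, n-1). *)
Definition theta_vert (ns : seq nat) : finType :=
  {c : 'I_(size ns) & 'I_(nth 0 ns c)}.

Definition theta_arc (ns : seq nat) : rel (theta_vert ns) :=
  fun x y =>
    (tag x == tag y) &&
    ((val (tagged y) == (val (tagged x)).+1) ||
     ((val (tagged x) == 0) && (val (tagged y) == (nth 0 ns (tag x)).-1))).

Definition theta_2reg_multi (T : finType) (e : rel T) : Prop :=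
  exists ns : seq nat,
    [/\ 2 <= size ns, all (fun n => 3 <= n) ns &
      exists phi : T -> theta_vert ns,
        bijective phi /\ forall x y, e x y = theta_arc (phi x) (phi y)].

(* Main.v *)
Require Import Defs.
From mathcomp Require Import all_boot zify.
Set Implicit Arguments. Unset Strict Implicit. Unset Printing Implicit Defensive.


Lemma sum_sub_le (I : finType) (A B : pred I) (F : I -> nat) :
  (forall i, A i -> B i) -> \sum_(i | A i) F i <= \sum_(i | B i) F i.
Proof.
move=> AB; rewrite [X in _ <= X](bigID A) /=.
rewrite (eq_bigl A); first exact: leq_addr.
by move=> i; apply/andP/idP => [[]//|Ai]; split=> //; apply: AB.
Qed.

Lemma sum_inj_le (I : finType) (A B : pred I) (h : I -> I) (F : I -> nat) :
  (forall i j, A i -> A j -> h i = h j -> i = j) -> (forall i, A i -> B (h i)) ->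
  \sum_(i | A i) F (h i) <= \sum_(j | B j) F j.
Proof.
move=> hinj0 hAB.
have hinj : {in A &, injective h} by move=> i j; rewrite !unfold_in; apply: hinj0.
rewrite -(big_imset (fun j => F j) hinj) /=.
apply: sum_sub_le => j /imsetP [i Ai ->]; exact: hAB.
Qed.


Definition lowerb (T : finType) (C : eqType) (comp : T -> C) (lev : T -> nat)
  (x y : T) : bool := (comp y == comp x) && (lev y < lev x).

Definition Rsum (T : finType) (C : eqType) (comp : T -> C) (lev : T -> nat)
  (P : C -> nat -> nat -> bool) (g : T -> nat) (v : T) : nat :=
  \sum_(x | lowerb comp lev v x && P (comp v) (lev v) (lev x)) g x.

Definition headb (T : finType) (C : eqType) (comp : T -> C) (lev : T -> nat)
  (S : {set T}) (h : T) : bool :=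
  (h \notin S) && [forall y, lowerb comp lev h y ==> (y \in S)].

Record Inv (T : finType) (C : eqType) (comp : T -> C) (lev : T -> nat)
  (P : C -> nat -> nat -> bool) (k : nat) (S : {set T}) (g : T -> nat) : Prop :=
  MkInv {
      inv_card : #|S| = k;
      inv_down : forall x y, x \in S -> lowerb comp lev x y -> y \in S;
      inv_inj : {in S &, injective g};
      inv_rng : forall x, x \in S -> 0 < g x <= k;
      inv_mono : forall x y, x \in S -> lowerb comp lev x y -> g y < g x;
      inv_R : forall x y, x \in S -> y \in S -> g x < g y ->
          Rsum comp lev P g x <= Rsum comp lev P g y;
      inv_H : forall x h, x \in S -> headb comp lev S h ->
          Rsum comp lev P g x <= Rsum comp lev P g h }.

Lemma Rsum_eq (T : finType) (C : eqType) (comp : T -> C) (lev : T -> nat)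
  (P : C -> nat -> nat -> bool) (g g' : T -> nat) v :
  (forall x, lowerb comp lev v x -> g x = g' x) ->
  Rsum comp lev P g v = Rsum comp lev P g' v.
Proof. by move=> H; apply: eq_bigr => x /andP [/H]. Qed.

Lemma greedy_step (T : finType) (C : eqType) (comp : T -> C) (lev : T -> nat)
  (P : C -> nat -> nat -> bool)
  (Hinj : forall x y, comp x = comp y -> lev x = lev y -> x = y)
  (Hdown : forall x b, b < lev x -> exists y, comp y = comp x /\ lev y = b)
  (HK : forall x a b, lev x = a.+1 -> b < a -> P (comp x) a b ->
          P (comp x) a.+1 b.+1)
  k S g : k < #|T| -> Inv comp lev P k S g ->
  exists S' g', Inv comp lev P k.+1 S' g'.
Proof.
move=> hk [cS dS iS rS mS RS HS].
have [x0 x0S] : exists x0, x0 \notin S.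
  apply/existsP; rewrite -negb_forall; apply/negP => /forallP allS.
  have : #|S| = #|T| by apply/eqP; rewrite eqn_leq max_card /=; apply/subset_leq_card/subsetP=> y _; exact: allS.
  by lia.
have [h0 h0S h0min] := @arg_minnP _ x0 (fun x => x \notin S) lev x0S.
have hd0 : headb comp lev S h0.
  rewrite /headb h0S /=; apply/forallP => y; apply/implyP => /andP [_ ly].
  by apply: contraLR ly => /h0min; rewrite -leqNgt.
have [h hh hmin] := @arg_minnP _ h0 (headb comp lev S) (Rsum comp lev P g) hd0.
have /andP [hS hlow] := hh.
pose g' := fun x => if x == h then k.+1 else g x.
have g'S : forall x, x \in S -> g' x = g x.
  by move=> x xS; rewrite /g'; case: eqP => // exh; move: hS; rewrite -exh xS.
have Rg'S : forall v, (forall x, lowerb comp lev v x -> x \in S) ->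
    Rsum comp lev P g' v = Rsum comp lev P g v.
  by move=> v Hv; apply: Rsum_eq => x /Hv /g'S.
have lowS : forall v, v \in S -> forall x, lowerb comp lev v x -> x \in S.
  by move=> v vS x; apply: dS.
have lowH : forall v, headb comp lev S v -> forall x, lowerb comp lev v x -> x \in S.
  by move=> v /andP [_ /forallP H] x lx; move: (H x); rewrite lx.
exists (h |: S), g'; constructor.
- by rewrite cardsU1 hS cS.
- move=> x y; rewrite in_setU1 => /orP [/eqP -> | xS] lxy; rewrite in_setU1; apply/orP; right.
    exact: lowH hh _ lxy.
  exact: dS xS lxy.
- move=> x y; rewrite !in_setU1 => /orP [/eqP -> | xS] /orP [/eqP -> | yS] //.
  + rewrite (g'S _ yS) /g' eqxx => E; have := rS _ yS; lia.
  + rewrite (g'S _ xS) /g' eqxx => E; have := rS _ xS; lia.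
  + by rewrite (g'S _ xS) (g'S _ yS); apply: iS.
- move=> x; rewrite in_setU1 => /orP [/eqP -> | xS].
    by rewrite /g' eqxx leqnn.
  by rewrite (g'S _ xS); have := rS _ xS; lia.
- move=> x y; rewrite in_setU1 => /orP [/eqP -> | xS] lxy.
    have yS := lowH _ hh _ lxy; rewrite (g'S _ yS) /g' eqxx; have := rS _ yS; lia.
  have yS := dS _ _ xS lxy; rewrite (g'S _ yS) (g'S _ xS); exact: mS.
- move=> x y; rewrite !in_setU1 => /orP [/eqP -> | xS] /orP [/eqP -> | yS].
  + by rewrite ltnn.
  + rewrite (g'S _ yS) /g' eqxx => E; have := rS _ yS; lia.
  + rewrite (Rg'S _ (lowS _ xS)) (Rg'S _ (lowH _ hh)) => _; exact: HS.
  + rewrite (g'S _ xS) (g'S _ yS) (Rg'S _ (lowS _ xS)) (Rg'S _ (lowS _ yS)); exact: RS.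
- move=> x h'; rewrite in_setU1 => xS' hh'.
  have Rx : Rsum comp lev P g' x <= Rsum comp lev P g h.
    case/orP: xS' => [/eqP -> | xS].
      by rewrite (Rg'S _ (lowH _ hh)).
    by rewrite (Rg'S _ (lowS _ xS)); apply: HS.
  have /andP [h'S' /forallP h'low] := hh'.
  have h'S : h' \notin S by move: h'S'; rewrite in_setU1 negb_or => /andP [].
  have h'h : h' != h by move: h'S'; rewrite in_setU1 negb_or => /andP [].
  case lh'h: (lowerb comp lev h' h).
  +
    have /andP [/eqP ch lvh] := lh'h.
    have lvh' : lev h' = (lev h).+1.
      apply/eqP; rewrite eqn_leq lvh andbT leqNgt; apply/negP => lt.
      have [w [cw lw]] := Hdown h' (lev h).+1 lt.
      have lw' : lowerb comp lev h' w by rewrite /lowerb cw eqxx lw lt.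
      have := h'low w; rewrite lw' /= in_setU1 => /orP [/eqP wh | wS].
        by move: lw; rewrite wh => /eqP; rewrite -[X in X == _]addn0 -addn1 eqn_add2l.
      have : h \in S by apply: (dS _ _ wS); rewrite /lowerb cw ch eqxx lw ltnSn.
      by rewrite (negbTE hS).
    apply: (leq_trans Rx).
    pose up := fun y : T => odflt y [pick w | (comp w == comp y) && (lev w == (lev y).+1)].
    have upP : forall y, lowerb comp lev h y ->
        comp (up y) = comp y /\ lev (up y) = (lev y).+1.
      move=> y /andP [/eqP cy ly]; rewrite /up; case: pickP => [w /andP [/eqP -> /eqP ->] //|].
      have lt1 : (lev y).+1 < lev h' by rewrite lvh' ltnS.
      have [w [cw lw]] := Hdown h' (lev y).+1 lt1.
      by move=> /(_ w); rewrite cw -ch -cy lw !eqxx.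
    rewrite /Rsum.
    apply: (@leq_trans (\sum_(y | lowerb comp lev h y && P (comp h) (lev h) (lev y)) g' (up y))).
      apply: leq_sum => y /andP [ly _].
      have yS := lowH _ hh _ ly.
      have [cu lu] := upP _ ly.
      idtac.
      have lup : lowerb comp lev h' (up y).
        case/andP: (ly) => /eqP cy lyv.
        by rewrite /lowerb cu cy ch eqxx lu lvh' ltnS lyv.
      have := h'low (up y); rewrite lup /= in_setU1 => /orP [/eqP uh | uS].
        by rewrite uh /g' eqxx; case/andP: (rS _ yS) => _ H; apply: leq_trans H _.
      rewrite (g'S _ uS); apply: ltnW; apply: mS uS _; by rewrite /lowerb cu eqxx lu ltnSn.
    apply: sum_inj_le.
      move=> y1 y2 /andP [l1 _] /andP [l2 _] E.
      have [c1 e1] := upP _ l1; have [c2 e2] := upP _ l2.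
      apply: Hinj.
        by case/andP: l1 => /eqP ->; case/andP: l2 => /eqP ->.
      by apply/eqP; rewrite -eqSS -e1 -e2 E.
    move=> y /andP [ly Py]; have [cu lu] := upP _ ly.
    have /andP [/eqP cy lyh] := ly.
    rewrite /lowerb cu cy ch eqxx lu lvh' ltnS lyh /=.
    apply: (HK h' (lev h) (lev y) lvh' lyh); by rewrite -ch.
  +
    have hdh' : headb comp lev S h'.
      rewrite /headb h'S /=; apply/forallP => y; apply/implyP => ly.
      move: (h'low y); rewrite ly in_setU1 /= => /orP [/eqP yh | //].
      by move: lh'h; rewrite -yh ly.
    rewrite (Rg'S _ (lowH _ hdh')).
    by apply: (leq_trans Rx); apply: hmin.
Qed.

Lemma greedy_exists (T : finType) (C : eqType) (comp : T -> C) (lev : T -> nat)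
  (P : C -> nat -> nat -> bool)
  (Hinj : forall x y, comp x = comp y -> lev x = lev y -> x = y)
  (Hdown : forall x b, b < lev x -> exists y, comp y = comp x /\ lev y = b)
  (HK : forall x a b, lev x = a.+1 -> b < a -> P (comp x) a b ->
          P (comp x) a.+1 b.+1) :
  exists g : T -> nat, [/\ injective g, (forall x, 0 < g x <= #|T|) &
    (forall u v, g u < g v -> Rsum comp lev P g u <= Rsum comp lev P g v)].
Proof.
have H : forall k, k <= #|T| -> exists S g, Inv comp lev P k S g.
  move=> k; elim: k => [|k IH] lk.
    by exists set0, (fun _ => 0); constructor => [|x|x y|x|x y|x y|x h]; rewrite ?cards0 ?inE.
  have [S [g I]] := IH (ltnW lk).
  exact: (greedy_step Hinj Hdown HK lk I).
have [S [g [cS _ iS rS _ RS _]]] := H #|T| (leqnn _).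
have ST : S = setT by apply/eqP; rewrite eqEcard subsetT cardsT cS leqnn.
exists g; split.
- by move=> x y; apply: iS; rewrite ST inE.
- by move=> x; apply: rS; rewrite ST inE.
- by move=> u v; apply: RS; rewrite ST inE.
Qed.


(* pure arithmetic on the positions of a single Theta-cycle of length n *)
Definition Wd (n k p q : nat) : bool :=
  if k is k'.+1 then (if p == 0 then (q == k) || ((k == 1) && (q == n.-1)) else q == p + k)
  else p == q.

Definition ddist (n p q : nat) : nat :=
  if p == q then 0 else if p == 0 then (if q == n.-1 then 1 else q) else q - p.

Definition reachb (p q : nat) : bool := (p == 0) || (p <= q).

Lemma Wd_dd n p q : 3 <= n -> p < n -> q < n -> reachb p q -> Wd n (ddist n p q) p q.
Proof.
rewrite /reachb /ddist /Wd => n3 pn qn.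
case: (p =P q) => [-> _|pq]; first by [].
case: (p =P 0) => [p0 _ | p0 /= pleq].
  case: (q =P n.-1) => [qn1 | qn1].
    by rewrite qn1 eqxx orbT.
  case: q qn pq qn1 => [|q] qn pq qn1; first by exfalso; apply: pq.
  by rewrite eqxx.
have -> : q - p = (q - p).-1.+1 by lia.
apply/eqP; lia.
Qed.

Lemma Wd_ge n k p q : 3 <= n -> p < n -> q < n -> Wd n k p q ->
  reachb p q && (ddist n p q <= k).
Proof.
rewrite /reachb /ddist /Wd => n3 pn qn.
case: k => [/eqP -> | k]; first by rewrite eqxx leqnn orbT.
case: (p =P 0) => [p0 | p0].
  move=> /orP [/eqP qk | /andP [/eqP k0 /eqP qn1]]; rewrite p0 /=.
    case: (0 =P q) => [//|_]; case: (q =P n.-1) => _; lia.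
  case: (0 =P q) => [//|_]; rewrite qn1 eqxx; lia.
move=> /eqP qpk; rewrite /=; apply/andP; split; first lia.
case: (p =P q) => _; lia.
Qed.


Definition vcomp (ns : seq nat) (T : finType) (phi : T -> theta_vert ns) (x : T) :
  'I_(size ns) := tag (phi x).
Definition vpos (ns : seq nat) (T : finType) (phi : T -> theta_vert ns) (x : T) : nat :=
  val (tagged (phi x)).
Definition vn (ns : seq nat) (T : finType) (phi : T -> theta_vert ns) (x : T) : nat :=
  nth 0 ns (vcomp phi x).

Lemma vpos_lt ns (T : finType) (phi : T -> theta_vert ns) x : vpos phi x < vn phi x.
Proof. exact: ltn_ord. Qed.

Lemma theta_eq ns (u v : theta_vert ns) :
  tag u = tag v -> val (tagged u) = val (tagged v) -> u = v.
Proof.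
case: u => cu tu; case: v => cv tv /= E; subst cv => /val_inj -> //.
Qed.

Lemma vinj ns (T : finType) (phi : T -> theta_vert ns) psi :
  cancel phi psi -> forall x y, vcomp phi x = vcomp phi y -> vpos phi x = vpos phi y -> x = y.
Proof.
move=> K x y c p; rewrite -(K x) -(K y); congr psi; exact: theta_eq.
Qed.

Lemma vex ns (T : finType) (phi : T -> theta_vert ns) psi :
  cancel psi phi -> forall (c : 'I_(size ns)) p, p < nth 0 ns c ->
  exists x, vcomp phi x = c /\ vpos phi x = p.
Proof.
move=> K c p hp; exists (psi (Tagged (fun c : 'I_(size ns) => 'I_(nth 0 ns c)) (Ordinal hp))).
by rewrite /vcomp /vpos K.
Qed.

Lemma varc ns (T : finType) (e : rel T) (phi : T -> theta_vert ns) :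
  (forall x y, e x y = theta_arc (phi x) (phi y)) ->
  forall x y, e x y = (vcomp phi x == vcomp phi y) &&
     ((vpos phi y == (vpos phi x).+1) || ((vpos phi x == 0) && (vpos phi y == (vn phi x).-1))).
Proof. by move=> he x y; rewrite he. Qed.

Lemma walk_char ns (T : finType) (e : rel T) (phi : T -> theta_vert ns) psi
  (K1 : cancel phi psi) (K2 : cancel psi phi)
  (he : forall x y, e x y = theta_arc (phi x) (phi y))
  (n3 : forall c : 'I_(size ns), 3 <= nth 0 ns c) :
  forall k u v, walkb e k u v =
    (vcomp phi u == vcomp phi v) && Wd (vn phi u) k (vpos phi u) (vpos phi v).
Proof.
elim=> [|k IH] u v.
  rewrite /= /Wd; apply/eqP/andP => [-> | [/eqP c /eqP p]]; first by [].
  exact: (vinj K1).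
rewrite /=; apply/existsP/andP => [[w /andP [ew]] | [/eqP cuv W]].
  rewrite IH (varc he) in ew * => /andP [/eqP cwv Wk].
  move: ew => /andP [/eqP cuw /orP [/eqP pw | /andP [/eqP pu0 /eqP pw]]].
  - split; first by rewrite cuw cwv.
    have nw : vn phi w = vn phi u by rewrite /vn cuw.
    have qlt := vpos_lt phi v.
    have nv : vn phi v = vn phi u by rewrite /vn -cwv cuw.
    move: Wk; rewrite /Wd nw pw; case: k {IH} => [/eqP E | k].
      by case: (vpos phi u =P 0) => [p0 |_]; rewrite -E ?p0 ?eqxx // addn1.
    rewrite /= => /eqP E.
    by case: (vpos phi u =P 0) => [p0 |_]; apply/eqP; rewrite ?p0 in E *; lia.
  - split; first by rewrite cuw cwv.
    have nw : vn phi w = vn phi u by rewrite /vn cuw.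
    have qlt := vpos_lt phi v.
    have nv : vn phi v = vn phi u by rewrite /vn -cwv cuw.
    have n3u := n3 (vcomp phi u).
    move: Wk; rewrite /Wd nw pw pu0 /=; case: k {IH} => [/eqP E | k].
      by rewrite -E !eqxx orbT.
    have -> : ((vn phi u).-1 == 0) = false by apply/eqP; rewrite /vn; lia.
    move=> /eqP E; exfalso; rewrite /vn in nv E qlt; lia.
have n3u := n3 (vcomp phi u).
have qlt := vpos_lt phi v.
have nv : vn phi v = vn phi u by rewrite /vn cuv.
move: W; rewrite /Wd; case: (vpos phi u =P 0) => [pu0 | pu0].
  move=> /orP [/eqP qk | /andP [/eqP k0 /eqP qn]].
    have h1 : 1 < nth 0 ns (vcomp phi u) by lia.
    have [w [cw pw]] := vex K2 h1.
    exists w; rewrite (varc he) IH cw pw pu0 eqxx /= cuv eqxx /=.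
    rewrite /vn cw; case: k qk {IH} => [->|k ->] //=; by rewrite add1n.
  have k00 : k = 0 by case: k0.
  subst k; exists v; rewrite (varc he) IH cuv eqxx /= qn pu0 !eqxx orbT /=.
  by [].
move=> /eqP qk.
have h1 : (vpos phi u).+1 < nth 0 ns (vcomp phi u) by rewrite /vn in nv qlt; lia.
have [w [cw pw]] := vex K2 h1.
exists w; rewrite (varc he) IH cw pw eqxx /= cuv eqxx /=.
rewrite /vn cw; case: k qk {IH} => [->|k ->] /=; rewrite eqxx /=; apply/eqP; lia.

Qed.


Lemma dist_char ns (T : finType) (e : rel T) (phi : T -> theta_vert ns) psi
  (K1 : cancel phi psi) (K2 : cancel psi phi)
  (he : forall x y, e x y = theta_arc (phi x) (phi y))
  (n3 : forall c : 'I_(size ns), 3 <= nth 0 ns c) u v k :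
  is_dist e u v k = [&& vcomp phi u == vcomp phi v, reachb (vpos phi u) (vpos phi v) &
                        k == ddist (vn phi u) (vpos phi u) (vpos phi v)].
Proof.
rewrite /is_dist (walk_char K1 K2 he n3).
case: (vcomp phi u =P vcomp phi v) => [cuv | //] /=.
have nu := n3 (vcomp phi u).
have pu := vpos_lt phi u; have pv := vpos_lt phi v.
have nv : vn phi v = vn phi u by rewrite /vn cuv.
rewrite nv in pv.
apply/andP/andP => [[W /forallP H] | [R /eqP ->]].
  have /andP [R le] := Wd_ge nu pu pv W; split => //.
  rewrite eqn_leq le andbT leqNgt; apply/negP => lt.
  by move: (H (Ordinal lt)) => /=; rewrite (walk_char K1 K2 he n3) cuv eqxx (Wd_dd nu pu pv R).
split; first exact: Wd_dd.
apply/forallP => j /=; rewrite (walk_char K1 K2 he n3) cuv eqxx /=; apply/negP => W.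
have /andP [_ le] := Wd_ge nu pu pv W.
by move: (ltn_ord j); rewrite ltnNge le.
Qed.

Lemma card_comp_le ns (T : finType) (phi : T -> theta_vert ns) psi
  (K2 : cancel psi phi) (c : 'I_(size ns)) : nth 0 ns c <= #|T|.
Proof.
pose h := fun p : 'I_(nth 0 ns c) => psi (Tagged (fun c : 'I_(size ns) => 'I_(nth 0 ns c)) p).
have hi : injective h.
  move=> p1 p2 /(congr1 phi); rewrite !K2 => E.
  apply/val_inj; exact: (congr1 (fun x : theta_vert ns => nat_of_ord (projT2 x)) E).
by have := leq_card h hi; rewrite card_ord.
Qed.

Lemma ND_char ns (T : finType) (e : rel T) (D : pred nat) (phi : T -> theta_vert ns) psi
  (K1 : cancel phi psi) (K2 : cancel psi phi)
  (he : forall x y, e x y = theta_arc (phi x) (phi y))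
  (n3 : forall c : 'I_(size ns), 3 <= nth 0 ns c) v y :
  ND e D v y = [&& vcomp phi v == vcomp phi y, reachb (vpos phi v) (vpos phi y) &
                   D (ddist (vn phi v) (vpos phi v) (vpos phi y))].
Proof.
rewrite /ND; apply/existsP/idP => [[k /andP [Hd Dk]] | /and3P [c r Dd]].
  move: Hd; rewrite (dist_char K1 K2 he n3) => /and3P [-> -> /eqP E].
  by rewrite -E.
have hb : ddist (vn phi v) (vpos phi v) (vpos phi y) < #|T|.+1.
  have := card_comp_le K2 (vcomp phi v); have := vpos_lt phi y.
  have nv : vn phi y = vn phi v by rewrite /vn (eqP c).
  rewrite nv /vn /ddist => a b.
  case: (_ =P _) => _; first by [].
  case: (_ =P _) => _; first by case: (_ =P _) => _; lia.
  lia.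
exists (Ordinal hb); rewrite (dist_char K1 K2 he n3) /= c r eqxx /=; exact: Dd.
Qed.


Definition levf (n p : nat) : nat := if p == 0 then n.-1 else n.-1 - p.
Definition dl (n a b : nat) : nat := if (a == n.-1) && (b == 0) then 1 else a - b.

Lemma levf_le n p : levf n p <= n.-1.
Proof. by rewrite /levf; case: (p == 0) => //; apply: leq_subr. Qed.

Lemma levf_inj n p q : 3 <= n -> p < n -> q < n -> levf n p = levf n q -> p = q.
Proof.
rewrite /levf => n3 pn qn.
case: (p =P 0) => [->|p0]; case: (q =P 0) => [->|q0] //; lia.
Qed.

Lemma levf_reach n p q : 3 <= n -> p < n -> q < n -> p != q ->
  reachb p q = (levf n q < levf n p).
Proof.
rewrite /levf /reachb => n3 pn qn /eqP pq.
case: (p =P 0) => [p0|p0]; case: (q =P 0) => [q0|q0] /=; apply/idP/idP => H //; lia.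
Qed.

Lemma levf_dd n p q : 3 <= n -> p < n -> q < n -> p != q -> reachb p q ->
  ddist n p q = dl n (levf n p) (levf n q).
Proof.
rewrite /levf /reachb /ddist /dl => n3 pn qn pq R.
move: R pq; case: (eqVneq p 0) => [p0|p0]; case: (eqVneq q 0) => [q0|q0] /=;
  repeat case: ifP => ? //; move=> *; try lia.
Qed.

Definition vlev ns (T : finType) (phi : T -> theta_vert ns) (x : T) : nat :=
  levf (vn phi x) (vpos phi x).

Definition Pd ns (D : pred nat) (c : 'I_(size ns)) (a b : nat) : bool :=
  D (dl (nth 0 ns c) a b).

Lemma ND_lev ns (T : finType) (e : rel T) (D : pred nat) (phi : T -> theta_vert ns) psi
  (K1 : cancel phi psi) (K2 : cancel psi phi)
  (he : forall x y, e x y = theta_arc (phi x) (phi y))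
  (n3 : forall c : 'I_(size ns), 3 <= nth 0 ns c) (D0 : D 0) v y :
  ND e D v y = (y == v) ||
     (lowerb (vcomp phi) (vlev phi) v y && Pd D (vcomp phi v) (vlev phi v) (vlev phi y)).
Proof.
rewrite (ND_char D K1 K2 he n3).
case: (y =P v) => [-> | yv] /=.
  by rewrite eqxx /reachb leqnn orbT /ddist eqxx.
rewrite /lowerb eq_sym.
case: (vcomp phi v =P vcomp phi y) => [cvy | ncvy] /=; last first.
  by case: eqP => //= E; exfalso; apply: ncvy; rewrite E.
have nv : vn phi y = vn phi v by rewrite /vn cvy.
have pv := vpos_lt phi v; have py := vpos_lt phi y; rewrite nv in py.
have n3v : 3 <= vn phi v by apply: n3.
have pvy : vpos phi v != vpos phi y.
  by apply/eqP => E; apply: yv; apply: (vinj K1); rewrite ?cvy.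
rewrite /vlev nv (levf_reach n3v pv py pvy).
case: (levf _ (vpos phi y) < _) /idP => lt; last by rewrite !andbF.
rewrite /Pd -/(vn phi v) (levf_dd n3v pv py pvy) ?andbT //.
by rewrite (levf_reach n3v pv py pvy).
Qed.

Lemma Dweight_split ns (T : finType) (e : rel T) (D : pred nat) (phi : T -> theta_vert ns) psi
  (K1 : cancel phi psi) (K2 : cancel psi phi)
  (he : forall x y, e x y = theta_arc (phi x) (phi y))
  (n3 : forall c : 'I_(size ns), 3 <= nth 0 ns c) (D0 : D 0) (g : T -> nat) v :
  Dweight e D g v = g v + Rsum (vcomp phi) (vlev phi) (Pd D) g v.
Proof.
rewrite /Dweight (bigD1 v) /=; last by rewrite (ND_lev K1 K2 he n3 D0) eqxx.
rewrite /Rsum; congr (g v + _).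
apply: eq_bigl => x; rewrite (ND_lev K1 K2 he n3 D0).
case: (x =P v) => [-> | xv] /=.
  by rewrite /lowerb ltnn andbF.
by rewrite andbT.
Qed.


Lemma sink_weight ns (T : finType) (e : rel T) (D : pred nat) (phi : T -> theta_vert ns) psi
  (K1 : cancel phi psi) (K2 : cancel psi phi)
  (he : forall x y, e x y = theta_arc (phi x) (phi y))
  (n3 : forall c : 'I_(size ns), 3 <= nth 0 ns c) (nD0 : ~~ D 0) (f : T -> nat) x :
  vpos phi x = (vn phi x).-1 -> Dweight e D f x = 0.
Proof.
move=> px; rewrite /Dweight big_pred0 // => y.
rewrite (ND_char D K1 K2 he n3); apply/negP => /and3P [/eqP c r Dd].
have nv : vn phi y = vn phi x by rewrite /vn c.
have py := vpos_lt phi y; rewrite nv in py.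
have n3x : 3 <= vn phi x by apply: n3.
move: r; rewrite /reachb px => /orP [/eqP E | le]; first lia.
have E : vpos phi y = vpos phi x by lia.
by move: Dd; rewrite E /ddist eqxx (negbTE nD0).
Qed.

Theorem mainTheorem19 (T : finType) (e : rel T) (D : pred nat)
  (hC : theta_2reg_multi e) (hD : distance_set e D) :
  D_antimagic e D <-> ex_minn (proj1 hD) = 0.
Proof.
have D0iff : ex_minn (proj1 hD) = 0 <-> D 0.
  case: ex_minnP => m Dm minm; split => [E | D0]; first by rewrite -E.
  by apply/eqP; rewrite -leqn0; apply: minm.
rewrite D0iff; clear D0iff.
case: hC => ns [h2 hall [phi [[psi K1 K2] he]]].
have n3 : forall c : 'I_(size ns), 3 <= nth 0 ns c.
  by move=> c; move/(all_nthP 0): hall => /(_ c (ltn_ord c)).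
split.
- move=> [f [[finj frng] winj]]; apply/idPn => nD0.
  have s0 : 0 < size ns by apply: leq_trans h2.
  have s1 : 1 < size ns by [].
  pose c0 := Ordinal s0; pose c1 := Ordinal s1.
  have l0 : (nth 0 ns c0).-1 < nth 0 ns c0 by have := n3 c0; lia.
  have l1 : (nth 0 ns c1).-1 < nth 0 ns c1 by have := n3 c1; lia.
  have [x0 [cx0 px0]] := vex K2 l0.
  have [x1 [cx1 px1]] := vex K2 l1.
  have w0 : Dweight e D f x0 = 0.
    by apply: (sink_weight K1 K2 he n3 nD0); rewrite px0 /vn cx0.
  have w1 : Dweight e D f x1 = 0.
    by apply: (sink_weight K1 K2 he n3 nD0); rewrite px1 /vn cx1.
  have : x0 = x1 by apply: winj; rewrite w0 w1.
  by move=> /(congr1 (vcomp phi)); rewrite cx0 cx1 => /(congr1 val).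
- move=> D0.
  have Hinj : forall x y, vcomp phi x = vcomp phi y -> vlev phi x = vlev phi y -> x = y.
    move=> x y c l; apply: (vinj K1) => //.
    have nv : vn phi y = vn phi x by rewrite /vn c.
    have py := vpos_lt phi y; rewrite nv in py.
    apply: (levf_inj (n3 (vcomp phi x)) (vpos_lt phi x) py).
    by move: l; rewrite /vlev nv.
  have Hdown : forall x b, b < vlev phi x -> exists y, vcomp phi y = vcomp phi x /\ vlev phi y = b.
    move=> x b lt.
    have le := levf_le (vn phi x) (vpos phi x).
    have n3x := n3 (vcomp phi x).
    have hp : (vn phi x).-1 - b < nth 0 ns (vcomp phi x).
      rewrite /vlev in lt; rewrite /vn in le lt *; lia.
    have [y [cy py]] := vex K2 hp.
    exists y; split => //.
    rewrite /vlev py /vn cy /levf.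
    rewrite /vlev in lt; rewrite /vn in le lt.
    case: eqP => E; lia.
  have HK : forall x a b, vlev phi x = a.+1 -> b < a -> Pd D (vcomp phi x) a b ->
      Pd D (vcomp phi x) a.+1 b.+1.
    move=> x a b la ba; rewrite /Pd /dl.
    have le := levf_le (vn phi x) (vpos phi x).
    rewrite /vlev in la; rewrite la /vn in le.
    have -> : (a == (nth 0 ns (vcomp phi x)).-1) = false by apply/eqP; lia.
    by rewrite andbF subSS.
  have [g [ginj grng gR]] := greedy_exists Hinj Hdown HK.
  exists g; split; first by split.
  move=> u v; rewrite !(Dweight_split K1 K2 he n3 D0) => E.
  case: (ltngtP (g u) (g v)) => [lt|lt|eq].
  + by have := gR _ _ lt; lia.
  + by have := gR _ _ lt; lia.
  + exact: ginj.
Qed.
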